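(* Let $n\ge1$, let $p$ be a prime, and let $L(\mathbf{X})=\sum_{i,j=1}^n a_{ij}x_{ij}\in\mathbb{F}_p[\mathbf{X}]$ be a nontrivial (not identically zero) linear form in the $n^2$ variables $\mathbf{X}=(x_{ij})_{i,j=1}^n$. Then \[ S_p(L)=\sum_{\substack{\mathbf{X}\in\mathbb{F}_p^{n\times n}\\ \det\mathbf{X}=0}}\exp\left(2\pi i\,L(\mathbf{X})/p\right)\ll p^{n^2-(n+1)/2}, \] where the implied constant depends only on $n$.
   Context: Here $L(\mathbf{X})\in\mathbb{F}_p$ is identified with an integer in $\{0,\dots,p-1\}$ in the exponential. *)

(* Defs.v *)
From HB Require Import structures.
From mathcomp Require Import all_boot all_order all_algebra.
From mathcomp Require Import all_classical all_reals all_analysis.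
Set Implicit Arguments. Unset Strict Implicit. Unset Printing Implicit Defensive.
Import Order.TTheory GRing.Theory Num.Theory.
Local Open Scope ring_scope.

Definition linform (p n : nat) (a X : 'M['F_p]_n) : 'F_p :=
  \sum_(i < n) \sum_(j < n) a i j * X i j.

(* Real and imaginary parts of
   S_p(L) = \sum_{X in F_p^{n x n}, det X = 0} exp(2 pi i L(X) / p),
   where L(X) in F_p is identified with its representative in {0,..,p-1}. *)
Definition angle (R : realType) (p n : nat) (a X : 'M['F_p]_n) : R :=
  2 * pi * (nat_of_ord (linform a X))%:R / p%:R.

Definition Sp_re (R : realType) (p n : nat) (a : 'M['F_p]_n) : R :=
  \sum_(X : 'M['F_p]_n | \det X == 0) cos (angle R a X).

Definition Sp_im (R : realType) (p n : nat) (a : 'M['F_p]_n) : R :=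
  \sum_(X : 'M['F_p]_n | \det X == 0) sin (angle R a X).

Definition Sp_abs (R : realType) (p n : nat) (a : 'M['F_p]_n) : R :=
  Num.sqrt (Sp_re R a ^+ 2 + Sp_im R a ^+ 2).

(* Main.v *)
Require Import Defs.
From HB Require Import structures.
From mathcomp Require Import all_boot all_order all_algebra.
From mathcomp Require Import all_classical all_reals all_analysis.
From mathcomp Require Import complex ring.
Import Order.TTheory GRing.Theory Num.Theory.
Local Open Scope ring_scope.

Section Ex.
Variable R : realType.

Definition ex (x : R) : R[i] := Complex (cos x) (sin x).

Lemma exD x y : ex (x + y) = ex x * ex y.
Proof.
rewrite /ex cosD sinD /=.
apply/eqP; rewrite eq_complex /= !eqxx /=.
by rewrite addrC eqxx.
Qed.

Lemma ex0 : ex 0 = 1.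
Proof. by rewrite /ex cos0 sin0. Qed.

Lemma ex2pi : ex (pi *+ 2) = 1.
Proof. by rewrite /ex cos2pi sin2pi. Qed.

Lemma ex2piq (q : nat) : ex (pi *+ 2 *+ q) = 1.
Proof. elim: q => [|q IH]; first by rewrite mulr0n ex0. by rewrite mulrS exD ex2pi IH mul1r. Qed.

Lemma norm_ex x : `|ex x| = 1.
Proof. by rewrite normc_def /= cos2Dsin2 sqrtr1. Qed.

Lemma sum_Complex (I : finType) (P : pred I) (f g : I -> R) :
  \sum_(i | P i) Complex (f i) (g i) = Complex (\sum_(i|P i) f i) (\sum_(i|P i) g i).
Proof. by elim/big_rec3: _ => //= i x y z _ ->. Qed.

Variable p : nat.
Hypothesis hp : prime p.

Definition th (t : 'F_p) : R := 2 * pi * (nat_of_ord t)%:R / p%:R.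
Definition E (t : 'F_p) : R[i] := ex (th t).

Lemma p_gt0 : (0 < p)%N. Proof. exact: prime_gt0. Qed.
Lemma pR_neq0 : (p%:R : R) != 0. Proof. by rewrite pnatr_eq0 -lt0n p_gt0. Qed.

Lemma valFp_add (t u : 'F_p) : nat_of_ord (t + u) = ((nat_of_ord t + nat_of_ord u) %% p)%N.
Proof. rewrite /=; congr (_ %% _)%N; exact: Fp_cast. Qed.

Lemma ED t u : E (t + u) = E t * E u.
Proof.
rewrite /E -exD.
have -> : th t + th u = th (t + u) + pi *+ 2 *+ ((nat_of_ord t + nat_of_ord u) %/ p)%N.
  rewrite /th valFp_add.
  have := divn_eq (nat_of_ord t + nat_of_ord u) p.
  move=> /(congr1 (fun m => (m%:R : R))) /= h.
  rewrite !natrD natrM in h.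
  have h2 : (((nat_of_ord t + nat_of_ord u) %% p)%N%:R : R) = (nat_of_ord t)%:R + (nat_of_ord u)%:R - ((nat_of_ord t + nat_of_ord u) %/ p)%N%:R * p%:R.
    by rewrite h addrC addKr.
  rewrite h2.
  have hp0 := pR_neq0.
  rewrite -[pi *+ 2 *+ _]mulr_natr -[pi *+ 2]mulr_natr.
  move: hp0; set P := (p%:R : R); set a := ((nat_of_ord t)%:R : R); set b := ((nat_of_ord u)%:R : R).
  set q := (((nat_of_ord t + nat_of_ord u) %/ p)%N%:R : R) => hp0.
  field. exact: hp0.
by rewrite exD ex2piq mulr1.
Qed.

Lemma E0 : E 0 = 1.
Proof. by rewrite /E /th /= mulr0 mul0r ex0. Qed.

Lemma normE t : `|E t| = 1.
Proof. exact: norm_ex. Qed.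

Lemma p_gt1 : (1 < p)%N. Proof. exact: prime_gt1. Qed.

Lemma E1_neq1 : E 1 != 1.
Proof.
have v1 : nat_of_ord (1 : 'F_p) = 1%N.
  rewrite /= Fp_cast //; exact: modn_small p_gt1.
apply/negP => /eqP h.
have hc : cos (th 1) = 1 by move: h => /(congr1 (@complex.Re R)).
have hP : (2 : R) <= p%:R by rewrite (ler_nat R 2 p) p_gt1.
have hp0 : (0 : R) < p%:R by apply: lt_le_trans hP.
have th_gt0 : 0 < th 1 by rewrite /th v1 mulr1 divr_gt0 // mulr_gt0 // pi_gt0.
have th_le : th 1 <= pi.
  by rewrite /th v1 mulr1 ler_pdivrMr // mulrC ler_pM2l // pi_gt0.
have hlt : cos (th 1) < cos 0.
  rewrite ltr_cos //.
  - by rewrite in_itv /= lexx /= (ltW (pi_gt0 R)).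
  - by rewrite in_itv /= th_le (ltW th_gt0).
by move: hlt; rewrite hc cos0 ltxx.
Qed.

Lemma sumE : \sum_(t : 'F_p) E t = 0.
Proof.
have h : \sum_(t : 'F_p) E t = (\sum_(t : 'F_p) E t) * E 1.
  rewrite mulr_suml [LHS](reindex_inj (addIr (1 : 'F_p))) /=.
  apply: eq_bigr => t _; exact: ED.
have : (\sum_(t : 'F_p) E t) * (E 1 - 1) = 0 by rewrite mulrBr mulr1 -h subrr.
move/eqP; rewrite mulf_eq0 subr_eq0 (negbTE E1_neq1) orbF.
by move/eqP.
Qed.

Lemma sumEM (b : 'F_p) : b != 0 -> \sum_(s : 'F_p) E (s * b) = 0.
Proof.
move=> hb; have h := sumE; by rewrite (reindex_inj (mulIf hb)) /= in h.
Qed.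

Variable n : nat.
Variable a : 'M['F_p]_n.
Variable i0 : 'I_n.

Definition upd (Y : 'M['F_p]_n) (x : 'rV['F_p]_n) : 'M['F_p]_n :=
  \matrix_(k, j) (if k == i0 then x 0 j else Y k j).
Definition cv (Y : 'M['F_p]_n) : 'rV['F_p]_n := \row_j cofactor Y i0 j.
Definition dot (x y : 'rV['F_p]_n) : 'F_p := \sum_j x 0 j * y 0 j.
Definition al : 'rV['F_p]_n := row i0 a.

Lemma cofactor_upd Y x j : cofactor (upd Y x) i0 j = cofactor Y i0 j.
Proof.
rewrite /cofactor; congr (_ * \det _).
apply/matrixP => k l; rewrite !mxE.
by rewrite eq_sym (negbTE (neq_lift i0 k)).
Qed.

Lemma det_upd Y x : \det (upd Y x) = dot x (cv Y).
Proof.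
rewrite (expand_det_row _ i0) /dot; apply: eq_bigr => j _.
by rewrite cofactor_upd !mxE eqxx.
Qed.

Lemma dot_row_cv Y k : k != i0 -> dot (row k Y) (cv Y) = 0.
Proof.
move=> hk; rewrite -det_upd.
apply: (@determinant_alternate _ _ _ i0 k); first by rewrite eq_sym.
by move=> j; rewrite !mxE eqxx (negbTE hk).
Qed.

Lemma lin_upd Y x : linform a (upd Y x) = linform a (upd Y 0) + dot al x.
Proof.
rewrite /linform (bigD1 i0) //= [in RHS](bigD1 i0) //=.
rewrite addrAC; congr (_ + _); last first.
  apply: eq_bigr => k hk; apply: eq_bigr => j _.
  by rewrite !mxE (negbTE hk).
rewrite /dot /al [X in _ = X + _]big1 ?add0r; last by move=> j _; rewrite !mxE eqxx mulr0.
by apply: eq_bigr => j _; rewrite !mxE eqxx.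
Qed.

Lemma card_rV : #|{: 'rV['F_p]_n}| = (p ^ n)%N.
Proof. by rewrite card_mx card_Fp // mul1n. Qed.

Lemma avg (f : 'M['F_p]_n -> R[i]) :
  \sum_(Y : 'M['F_p]_n) \sum_(x : 'rV['F_p]_n) f (upd Y x) = (p ^ n)%:R * \sum_X f X.
Proof.
have e1 Y : \sum_(x : 'rV['F_p]_n) f (upd Y x) = \sum_(x : 'rV['F_p]_n) f (Y + upd 0 x).
  rewrite (reindex_inj (addIr (row i0 Y))) /=.
  apply: eq_bigr => x _; congr f; apply/matrixP => k j; rewrite !mxE.
  by case: eqP => [->|_]; rewrite ?addr0 // addrC.
under eq_bigr do rewrite e1.
rewrite exchange_big /=.
have e2 x : \sum_(Y : 'M['F_p]_n) f (Y + upd 0 x) = \sum_X f X.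
  by rewrite [RHS](reindex_inj (addIr (upd 0 x))).
under eq_bigr do rewrite e2.
by rewrite sumr_const card_rV mulr_natl.
Qed.

Lemma dotDl x y c : dot (x + y) c = dot x c + dot y c.
Proof. by rewrite /dot -big_split; apply: eq_bigr => j _; rewrite mxE mulrDl. Qed.
Lemma dotZl s x c : dot (s *: x) c = s * dot x c.
Proof. by rewrite /dot mulr_sumr; apply: eq_bigr => j _; rewrite mxE mulrA. Qed.
Lemma dotDr x y c : dot c (x + y) = dot c x + dot c y.
Proof. by rewrite /dot -big_split; apply: eq_bigr => j _; rewrite mxE mulrDr. Qed.
Lemma dotZr s x c : dot c (s *: x) = s * dot c x.
Proof. by rewrite /dot mulr_sumr; apply: eq_bigr => j _; rewrite mxE mulrCA. Qed.

Definition Ic (c : 'rV['F_p]_n) : R[i] := \sum_(x | dot x c == 0) E (dot al x).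
Definition Nc : R[i] := \sum_(x : 'rV['F_p]_n | dot al x == 0) 1.
Definition Q (Y : 'M['F_p]_n) : bool := [forall k, (k != i0) ==> (dot al (row k Y) == 0)].

Lemma pC_neq0 : (p%:R : R[i]) != 0.
Proof. by rewrite pnatr_eq0 -lt0n p_gt0. Qed.

Lemma I_zero c d : dot d c = 0 -> dot al d != 0 -> Ic c = 0.
Proof.
move=> hd hb; set b := dot al d.
have h s : Ic c = Ic c * E (s * b).
  rewrite /Ic mulr_suml [LHS](reindex_inj (addIr (s *: d))) /=.
  apply: eq_big => x.
    by rewrite dotDl dotZl hd mulr0 addr0.
  by move=> _; rewrite dotDr dotZr ED.
have : (p%:R : R[i]) * Ic c = 0.
  have -> : (p%:R : R[i]) * Ic c = \sum_(s : 'F_p) Ic c.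
    by rewrite sumr_const card_Fp // mulr_natl.
  rewrite (eq_bigr (fun s => Ic c * E (s * b))); last by move=> s _; exact: h.
  by rewrite -mulr_sumr sumEM // mulr0.
by move/eqP; rewrite mulf_eq0 (negbTE pC_neq0) /= => /eqP.
Qed.

Lemma Nc_ge0 : 0 <= Nc.
Proof. by apply: sumr_ge0 => x _; exact: ler01. Qed.

Lemma I_bound Y : `|Ic (cv Y)| <= (if Q Y then Nc else 0).
Proof.
case: (boolP [exists d, (dot d (cv Y) == 0) && (dot al d != 0)]).
  move/existsP => [d /andP [/eqP h1 h2]]; rewrite (@I_zero _ _ h1 h2) normr0.
  by case: ifP => // _; exact: Nc_ge0.
rewrite negb_exists => /forallP H.
have H' d : dot d (cv Y) = 0 -> dot al d = 0.
  by move=> h0; move: (H d); rewrite h0 eqxx /= negbK => /eqP.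
have -> : Q Y = true.
  apply/forallP => k; apply/implyP => hk; apply/eqP; apply: H'; exact: dot_row_cv.
rewrite /Ic; apply: le_trans (ler_norm_sum _ _ _) _.
rewrite /Nc big_mkcond [X in _ <= X]big_mkcond; apply: ler_sum => x _.
case: ifP => hx.
  by rewrite (H' x (eqP hx)) eqxx normE.
by case: ifP => _ //; exact: ler01.
Qed.

Lemma n_gt0 : (0 < n)%N. Proof. by case: i0 => k hk; apply: leq_ltn_trans hk. Qed.

Lemma Nc_val (j0 : 'I_n) : a i0 j0 != 0 -> Nc = (p ^ n.-1)%:R.
Proof.
move=> hj.
pose u : 'rV['F_p]_n := \row_j (if j == j0 then (a i0 j0)^-1 else 0).
have hu : dot al u = 1.
  rewrite /dot (bigD1 j0) //= big1 ?addr0.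
    by rewrite !mxE eqxx mulfV.
  by move=> j hj'; rewrite !mxE (negbTE hj') mulr0.
have hN t : \sum_(x : 'rV['F_p]_n | dot al x == t) (1 : R[i]) = Nc.
  rewrite (reindex_inj (addIr (t *: u))) /=; apply: eq_bigl => x.
  by rewrite dotDr dotZr hu mulr1 -subr_eq0 addrK.
have hsum : \sum_(t : 'F_p) \sum_(x : 'rV['F_p]_n | dot al x == t) (1 : R[i]) = (p ^ n)%:R.
  under eq_bigr do rewrite big_mkcond.
  rewrite exchange_big /=.
  rewrite (eq_bigr (fun _ => 1)); last first.
    by move=> x _; rewrite -big_mkcond (big_pred1 (dot al x)).
  by rewrite sumr_const card_rV.
move: hsum; rewrite (eq_bigr (fun _ => Nc)); last by move=> t _; exact: hN.
 rewrite sumr_const card_Fp // => h.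
apply: (mulfI pC_neq0).
by rewrite -natrM -expnS prednK ?n_gt0 // mulr_natl h.
Qed.

Definition g (k : 'I_n) (y : 'rV['F_p]_n) : R[i] :=
  if (k != i0) ==> (dot al y == 0) then 1 else 0.

Lemma QE Y : (if Q Y then 1 else 0 : R[i]) = \prod_k g k (row k Y).
Proof.
case: (boolP (Q Y)) => hQ.
  by rewrite big1 // => k _; rewrite /g (forallP hQ).
move: hQ; rewrite negb_forall => /existsP [k hk].
by rewrite (bigD1 k) //= /g (negbTE hk) mul0r.
Qed.

Lemma M_val : \sum_(Y : 'M['F_p]_n) (if Q Y then 1 else 0 : R[i]) = (p ^ n)%:R * Nc ^+ n.-1.
Proof.
under eq_bigr do rewrite QE.
pose h (f : {ffun 'I_n -> 'rV['F_p]_n}) : 'M['F_p]_n := \matrix_(k, j) f k 0 j.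
have hrow f k : row k (h f) = f k by apply/rowP => j; rewrite !mxE.
rewrite (reindex h) /=; last first.
  exists (fun Y => [ffun k => row k Y]) => [f _ | Y _].
    by apply/ffunP => k; rewrite ffunE hrow.
  by apply/matrixP => k j; rewrite !mxE ffunE mxE.
under eq_bigr do under eq_bigr do rewrite hrow.
rewrite -(bigA_distr_bigA (fun k y => g k y)) /=.
rewrite (bigD1 i0) //=.
have -> : \sum_y g i0 y = (p ^ n)%:R.
  by rewrite /g (eq_bigr (fun _ => 1)) ?sumr_const ?card_rV // => y _; rewrite eqxx.
congr (_ * _).
rewrite (eq_bigr (fun _ => Nc)); last first.
  move=> k hk; rewrite /Nc [RHS]big_mkcond; apply: eq_bigr => y _.
  by rewrite /g hk.
by rewrite prodr_const cardC1 card_ord.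
Qed.

Lemma exprn_pred (x : R[i]) : x ^+ n = x * x ^+ n.-1.
Proof. by rewrite -exprS prednK // n_gt0. Qed.

Lemma S_bound (j0 : 'I_n) : a i0 j0 != 0 ->
  `|\sum_(X : 'M['F_p]_n | \det X == 0) E (linform a X)| <= ((p ^ n.-1) ^ n)%:R.
Proof.
move=> hj; set S := \sum_(X : 'M['F_p]_n | \det X == 0) E (linform a X).
have hpn : (0 : R[i]) < (p ^ n)%:R by rewrite ltr0n expn_gt0 p_gt0.
have key : (p ^ n)%:R * S = \sum_(Y : 'M['F_p]_n) E (linform a (upd Y 0)) * Ic (cv Y).
  rewrite /S big_mkcond -(avg (fun X => if \det X == 0 then E (linform a X) else 0)).
  apply: eq_bigr => Y _; rewrite /Ic mulr_sumr [RHS]big_mkcond.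
  apply: eq_bigr => x _; rewrite det_upd lin_upd ED.
  by case: ifP => _ //; rewrite mulr0.
have : `|(p ^ n)%:R * S| <= (p ^ n)%:R * ((p ^ n.-1) ^ n)%:R.
  rewrite key; apply: le_trans (ler_norm_sum _ _ _) _.
  apply: (@le_trans _ _ (\sum_(Y : 'M['F_p]_n) (if Q Y then Nc else 0))).
    apply: ler_sum => Y _; rewrite normrM normE mul1r; exact: I_bound.
  have -> : \sum_(Y : 'M['F_p]_n) (if Q Y then Nc else 0) =
            Nc * \sum_(Y : 'M['F_p]_n) (if Q Y then 1 else 0).
    by rewrite mulr_sumr; apply: eq_bigr => Y _; case: ifP; rewrite ?mulr1 ?mulr0.
  rewrite M_val (@Nc_val j0 hj) !natrX [(_ ^+ n.-1) ^+ n]exprn_pred [_ ^+ n]exprn_pred.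
  rewrite le_eqVlt; apply/orP; left; apply/eqP; ring.
by rewrite normrM ger0_norm ?(ltW hpn) // ler_pM2l.
Qed.

End Ex.

Lemma real_ineq (R : realType) (n p : nat) : (1 <= n)%N -> (1 < p)%N ->
  (((p ^ n.-1) ^ n)%N%:R : R) <= 1 * (p%:R ^+ (n * n)) / (Num.sqrt (p%:R : R)) ^+ n.+1.
Proof.
move=> hn hp1.
have hP1 : (1 : R) <= p%:R by rewrite ler1n ltnW.
have hP0 : (0 : R) < p%:R by apply: lt_le_trans hP1; exact: ltr01.
have hs1 : 1 <= Num.sqrt (p%:R : R) by rewrite -[X in X <= _]sqrtr1 ler_sqrt ?ler0n.
have hs0 : 0 < Num.sqrt (p%:R : R) by apply: lt_le_trans hs1; exact: ltr01.
rewrite mul1r ler_pdivlMr ?exprn_gt0 //.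
have h1 : Num.sqrt (p%:R : R) ^+ n.+1 <= p%:R ^+ n.
  rewrite -[X in X ^+ n](@sqr_sqrtr _ (p%:R : R)) ?ler0n // -exprM.
  apply: ler_weXn2l => //; by rewrite mul2n -addnn -add1n leq_add2r.
apply: (@le_trans _ _ (((p ^ n.-1) ^ n)%N%:R * p%:R ^+ n)).
  apply: ler_wpM2l => //; exact: ler0n.
rewrite !natrX -!exprM -exprD.
apply: ler_weXn2l => //.
by rewrite -mulSnr prednK.
Qed.

Theorem lemma3p5 (R : realType) (n : nat) (hn : (1 <= n)%N) :
  exists C : R, 0 < C /\
    forall (p : nat), prime p ->
    forall (a : 'M['F_p]_n), a != 0 ->
      Sp_abs R a <= C * (p%:R ^+ (n * n)) / (Num.sqrt (p%:R : R)) ^+ n.+1.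
Proof.
exists 1; split; first exact: ltr01.
move=> p hp a ha.
case: (pickP [pred ij : 'I_n * 'I_n | a ij.1 ij.2 != 0]) => [[i0 j0] /= hj | h]; last first.
  exfalso; move/negP: ha; apply; apply/eqP/matrixP => i j.
  by move: (h (i, j)) => /= /negbFE /eqP ->; rewrite mxE.
have hb := @S_bound R p hp n a i0 j0 hj.
have hS : \sum_(X : 'M['F_p]_n | \det X == 0) E R p (linform a X) = Complex (Sp_re R a) (Sp_im R a).
  by rewrite /Sp_re /Sp_im -sum_Complex.
rewrite hS normc_def /= -(rmorph_nat (real_complex R)) lecR in hb.
apply: le_trans hb _.
exact: real_ineq hn (prime_gt1 hp).
Qed.
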